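(* Let $V=\{v_1,\dots,v_m\}\subset\mathbb{R}^d$ be a finite set of points and $r\in\mathbb{R}^d$. Let $\mathcal{B}(V,r)$ be the poset, ordered by inclusion, of all weakly $r$-balanced subsets $S\subset V$ with $S\neq V$, and let $\overline{\mathcal{B}}(V,r)$ be the poset, ordered by inclusion, of all $r$-balanced subsets $S\subset V$ with $S\neq V$. Then the order complexes are homotopy equivalent: $\Delta\mathcal{B}(V,r)\simeq\Delta\overline{\mathcal{B}}(V,r)$.
   Context: A subset $S\subset V$ is called weakly $r$-balanced if $r\in\mathrm{conv}(S)$, and $r$-balanced if $r\in\mathrm{relint}(\mathrm{conv}(S))$ (relative interior taken within the affine hull of $S$). For a poset $\mathcal{P}$, $\Delta\mathcal{P}$ denotes its order complex. *)

(* Defs.v *)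
From mathcomp Require Import all_boot all_order all_algebra.
From mathcomp Require Import all_classical all_reals all_analysis.
Import numFieldNormedType.Exports.
Set Implicit Arguments. Unset Strict Implicit. Unset Printing Implicit Defensive.
Import Order.TTheory GRing.Theory Num.Theory.
Local Open Scope ring_scope.
Local Open Scope classical_set_scope.

(* Points v : 'I_m -> 'rV[R]_d (the finite set V = {v_1,...,v_m}); a subset
   S of V is represented by its index set S : {set 'I_m}. *)

Definition in_conv (R : realType) (d m : nat) (v : 'I_m -> 'rV[R]_d)
    (S : {set 'I_m}) (x : 'rV[R]_d) : Prop :=
  exists lam : 'I_m -> R,
    [/\ forall i, 0 <= lam i,
        forall i, i \notin S -> lam i = 0,
        \sum_i lam i = 1
      & \sum_i lam i *: v i = x].

Definition in_aff (R : realType) (d m : nat) (v : 'I_m -> 'rV[R]_d)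
    (S : {set 'I_m}) (x : 'rV[R]_d) : Prop :=
  exists mu : 'I_m -> R,
    [/\ forall i, i \notin S -> mu i = 0,
        \sum_i mu i = 1
      & \sum_i mu i *: v i = x].

Definition in_relint_conv (R : realType) (d m : nat) (v : 'I_m -> 'rV[R]_d)
    (S : {set 'I_m}) (x : 'rV[R]_d) : Prop :=
  in_conv v S x /\
  exists2 e : R, 0 < e &
    forall y : 'rV[R]_d, in_aff v S y -> `|y - x| < e -> in_conv v S y.

Definition weakly_balanced (R : realType) (d m : nat) (v : 'I_m -> 'rV[R]_d)
    (r : 'rV[R]_d) (S : {set 'I_m}) : Prop := in_conv v S r.

Definition balanced (R : realType) (d m : nat) (v : 'I_m -> 'rV[R]_d)
    (r : 'rV[R]_d) (S : {set 'I_m}) : Prop := in_relint_conv v S r.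

(* Geometric realization of the order complex of the finite poset
   ({x : T | P x}, le): points are convex combinations (barycentric
   coordinates) of vertices whose support is a chain of the poset. *)
Definition order_complex_realization (R : realType) (T : finType)
    (le : rel T) (P : T -> Prop) : set {ptws T -> (R : topologicalType)} :=
  [set x : {ptws T -> (R : topologicalType)} |
     (forall t, 0 <= x t) /\
     \sum_t x t = 1 /\
     (forall t, x t != 0 -> P t) /\
     (forall s t, x s != 0 -> x t != 0 -> le s t \/ le t s)].

Definition homotopic_on (R : realType) (X : topologicalType) (A : set X)
    (f g : X -> X) : Prop :=
  exists H : R * X -> X,
    [/\ {within [set p : R * X | 0 <= p.1 <= 1 /\ A p.2], continuous H},
        forall t x, 0 <= t <= 1 -> A x -> A (H (t, x)),
        forall x, A x -> H (0, x) = f x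
      & forall x, A x -> H (1, x) = g x].

Definition homotopy_equivalent (R : realType) (X Y : topologicalType)
    (A : set X) (B : set Y) : Prop :=
  exists (f : X -> Y) (g : Y -> X),
    [/\ {within A, continuous f} /\ (forall x, A x -> B (f x)),
        {within B, continuous g} /\ (forall y, B y -> A (g y)),
        homotopic_on R A (g \o f) id
      & homotopic_on R B (f \o g) id].

(* Main.v *)
Require Import Defs.
From mathcomp Require Import all_boot all_order all_algebra.
From mathcomp Require Import all_classical all_reals all_analysis.
From mathcomp Require Import lra.
Import numFieldNormedType.Exports.
Import Order.TTheory GRing.Theory Num.Theory.
Local Open Scope ring_scope.
Local Open Scope classical_set_scope.

Lemma ptws_cont (R : realType) (X : topologicalType) (I : Type) (g : X -> {ptws I -> (R : topologicalType)}) :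
  (forall i, continuous (fun x => g x i)) -> continuous g.
Proof.
move=> h x.
apply/(@cvg_sup (I -> R) I (fun i => Topological.class
    (initial_topology (fun f : (I -> R) => f i)))) => i.
move=> U /= [?/= [[W oW <-]]] /= Wg /filterS; apply; apply: (h i x).
exact: open_nbhs_nbhs.
Qed.

Lemma cont_sum (R : realType) (X : topologicalType) (J : finType) (P : pred J)
  (g : J -> X -> R) : (forall j, continuous (g j)) ->
  continuous (fun x => \sum_(j | P j) g j x).
Proof.
move=> h; apply: (@continuous_big R J +%R 0 P _ _ (index_enum J) g) => //.
exact: add_continuous.
Qed.

Lemma sum_pred_le (R : realType) (J : finType) (p q : pred J) (x : J -> R) :
  (forall U, p U -> q U) -> (forall U, 0 <= x U) ->
  \sum_(U | p U) x U <= \sum_(U | q U) x U.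
Proof.
move=> pq x0; rewrite [X in _ <= X](bigID p) /=.
rewrite (eq_bigl p); last by move=> U; case pU: (p U); rewrite ?andbT ?andbF ?pq.
by rewrite lerDl sumr_ge0.
Qed.

Section Topo.
Variables (R : realType) (I : finType) (P Q : {set I} -> Prop) (f : {set I} -> {set I}).
Hypotheses (f_sub : forall S, f S \subset S)
  (f_mono : forall S T : {set I}, S \subset T -> f S \subset f T)
  (PQ : forall S, P S -> Q (f S)) (QP : forall S, Q S -> P S)
  (Qfix : forall S, Q S -> f S = S).

Implicit Types (S T U : {set I}).
Local Notation X := {ptws {set I} -> (R : topologicalType)}.
Local Notation le := (fun S T : {set I} => S \subset T).
Let A := @order_complex_realization R _ le P.
Let B := @order_complex_realization R _ le Q.

Definition Fm (x : X) : X := fun T => \sum_(S | f S == T) x S.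
Definition cum (x : X) (S : {set I}) := \sum_(U : {set I} | U \proper S) x U.
Definition aa (s : R) (x : X) (S : {set I}) := Num.max 0 (Num.min (s - cum x S) (x S)).
Definition Km (s : R) (x : X) : X :=
  fun T => \sum_(S | f S == T) aa s x S + (x T - aa s x T).

Lemma proj_cont (S : {set I}) : continuous (fun x : X => x S).
Proof. exact: (@proj_continuous _ (fun _ : {set I} => (R : topologicalType)) S). Qed.

Lemma Fm_cont : continuous Fm.
Proof.
apply: ptws_cont => T; apply: cont_sum => S; exact: proj_cont.
Qed.

Lemma aa_cont (S : {set I}) : continuous (fun p : R * X => aa (1 - p.1) p.2 S).
Proof.
move=> p.
have h1 : {for p, continuous (fun q : R * X => 1 - q.1 - cum q.2 S : R^o)}.
  apply: continuousB.
    apply: continuousB; first exact: cst_continuous.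
    exact: cvg_fst.
  apply: (@continuous_comp _ _ _ snd (fun x : X => cum x S : R^o)).
    exact: cvg_snd.
  apply: cont_sum => U; exact: proj_cont.
have h2 : {for p, continuous (fun q : R * X => q.2 S : R^o)}.
  apply: (@continuous_comp _ _ _ snd (fun x : X => x S : R^o)).
    exact: cvg_snd.
  exact: proj_cont.
have h3 := continuous_min h1 h2.
have h4 := @continuous_max R _ (fun _ => 0 : R^o) _ p (@cst_continuous _ _ (0 : R^o) p) h3.
exact: h4.
Qed.


Lemma sum_nz {J : finType} {p : pred J} {g : J -> R} :
  \sum_(j | p j) g j != 0 -> exists2 j, p j & g j != 0.
Proof.
move=> h; apply: contrapT => hn; move/eqP: h; apply.
apply: big1 => j pj; apply: contrapT => gj; apply: hn; exists j => //; exact/eqP.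
Qed.

Lemma sum_fm (x : X) : \sum_T \sum_(S | f S == T) x S = \sum_S x S.
Proof.
by rewrite [RHS](partition_big f predT) //; apply: eq_bigr => T _; apply: eq_bigl.
Qed.

Section InA.
Variable x : X.
Hypothesis Ax : A x.

Let x0 : forall t, 0 <= x t. Proof. by case: Ax. Qed.
Let x1 : \sum_t x t = 1. Proof. by case: Ax => _ []. Qed.
Let xP : forall t, x t != 0 -> P t. Proof. by case: Ax => _ [_ []]. Qed.
Let xc : forall s t, x s != 0 -> x t != 0 -> s \subset t \/ t \subset s.
Proof. by case: Ax => _ [_ [_]]. Qed.

Lemma cum_ge0 S : 0 <= cum x S.
Proof. by apply: sumr_ge0. Qed.

Lemma cum_sub S : cum x S + x S = \sum_(U : {set I} | U \subset S) x U.
Proof.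
rewrite [RHS](bigD1 S) //= addrC; congr (_ + _).
by apply: eq_bigl => U; rewrite finset.properEneq andbC.
Qed.

Lemma cum_le {T S} : T \proper S -> cum x T + x T <= cum x S.
Proof.
move=> TS; rewrite cum_sub; apply: sum_pred_le => // U UT.
exact: sub_proper_trans UT TS.
Qed.

Lemma cum_le1 S : cum x S + x S <= 1.
Proof. by rewrite cum_sub -x1; apply: sum_pred_le. Qed.

Lemma aa_ge0 s S : 0 <= aa s x S.
Proof. by rewrite /aa le_max lexx. Qed.

Lemma aa_le s S : aa s x S <= x S.
Proof. by rewrite /aa ge_max x0 ge_min lexx ssrbool.orbT. Qed.

Lemma aa0 S : aa 0 x S = 0.
Proof.
by rewrite /aa max_l // ge_min sub0r oppr_le0 cum_ge0.
Qed.

Lemma aa1 S : aa 1 x S = x S.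
Proof.
have h := cum_le1 S.
rewrite /aa min_r; last by lra.
rewrite max_r //; exact: x0.
Qed.

Lemma Km_nz s T : Km s x T != 0 ->
  (exists2 S, f S = T & aa s x S != 0) \/ x T - aa s x T != 0.
Proof.
rewrite /Km; have [h|h] := eqVneq (\sum_(S | f S == T) aa s x S) 0.
  by rewrite h add0r => ?; right.
move=> _; left; have [S /eqP fS aS] := sum_nz h; by exists S.
Qed.

Lemma aa_nz {s S} : aa s x S != 0 -> x S != 0.
Proof.
move=> h; apply/eqP => e; move: h; apply/negP; rewrite negbK eq_le aa_ge0 ssrbool.andbT.
by rewrite -e aa_le.
Qed.

Lemma xa_nz {s T} : x T - aa s x T != 0 -> x T != 0.
Proof.
move=> h; apply: contra h => /eqP e; have h1 := aa_le s T; have h2 := aa_ge0 s T.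
rewrite e in h1 *; apply/eqP; lra.
Qed.

Lemma aa_chain {s S T} : aa s x S != 0 -> x T - aa s x T != 0 -> S \subset T.
Proof.
move=> aS aT; have xS := aa_nz aS.
have xT := xa_nz aT.
case: (xc _ _ xS xT) => // TS.
have [e|TpS] := eqVproper TS; first by rewrite e subxx.
exfalso.
have h1 := cum_le TpS.
have h2 : 0 < aa s x S by rewrite lt_neqAle eq_sym aS aa_ge0.
have h3 : aa s x T < x T.
  by rewrite lt_neqAle aa_le ssrbool.andbT; apply: contra aT => /eqP ->; rewrite subrr.
move: h2; rewrite /aa lt_max ltxx /= lt_min => /andP[h2 _].
move: h3; rewrite /aa gt_max => /andP [_]; rewrite gt_min ltxx ssrbool.orbF => h3.
lra.
Qed.

Lemma Km_in s : A (Km s x).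
Proof.
split.
  move=> T; rewrite /Km addr_ge0 ?sumr_ge0 // => [S _|]; first exact: aa_ge0.
  by rewrite subr_ge0 aa_le.
split.
  rewrite /Km big_split /= sum_fm sumrB x1; lra.
split.
  move=> T /Km_nz [[S <- aS]|aT].
    by apply: QP; apply: PQ; apply: xP; apply: aa_nz aS.
  by apply: xP; apply: xa_nz aT.
move=> T1 T2 /Km_nz h1 /Km_nz h2.
case: h1 h2 => [[S1 <- a1]|b1] [[S2 <- a2]|b2].
- case: (xc _ _ (aa_nz a1) (aa_nz a2)) => h; [left|right]; exact: f_mono.
- left; exact: (fintype.subset_trans (f_sub S1) (aa_chain a1 b2)).
- right; exact: (fintype.subset_trans (f_sub S2) (aa_chain a2 b1)).
- exact: xc (xa_nz b1) (xa_nz b2).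
Qed.

Lemma Km1 : Km 1 x = Fm x.
Proof.
apply/funext => T; rewrite /Km /Fm aa1 subrr addr0.
by apply: eq_bigr => S _; rewrite aa1.
Qed.

Lemma Km0 : Km 0 x = x.
Proof.
apply/funext => T; rewrite /Km aa0 subr0 big1 ?add0r // => S _; exact: aa0.
Qed.

End InA.

Lemma Fm_in x : A x -> B (Fm x).
Proof.
move=> Ax; have [x0 [x1 [xP xc]]] := Ax.
split; first by move=> T; apply: sumr_ge0.
split; first by rewrite sum_fm.
split.
  by move=> T /sum_nz [S /eqP <- xS]; apply: PQ; apply: xP.
move=> T1 T2 /sum_nz [S1 /eqP <- h1] /sum_nz [S2 /eqP <- h2].
case: (xc _ _ h1 h2) => h; [left|right]; exact: f_mono.
Qed.

Lemma Fm_id x : B x -> Fm x = x.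
Proof.
move=> [x0 [x1 [xQ xc]]]; apply/funext => T; rewrite /Fm big_mkcond /=.
rewrite (eq_bigr (fun S => if S == T then x S else 0)).
  by rewrite -big_mkcond big_pred1_eq.
move=> S _; have [e|ne] := eqVneq (x S) 0; first by rewrite e; case: ifP; case: ifP.
by rewrite Qfix //; apply: xQ.
Qed.

Lemma BA x : B x -> A x.
Proof.
move=> [x0 [x1 [xQ xc]]]; split => //; split => //; split => // t h; exact/QP/xQ.
Qed.

Lemma Km_cont : continuous (fun p : R * X => Km (1 - p.1) p.2).
Proof.
apply: ptws_cont => T; rewrite /Km.
move=> p.
have h1 : {for p, continuous (fun q : R * X => \sum_(S | f S == T) aa (1 - q.1) q.2 S : R^o)}.
  by apply: cont_sum => S; exact: aa_cont.
have h2 : {for p, continuous (fun q : R * X => q.2 T : R^o)}.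
  apply: (@continuous_comp _ _ _ snd (fun x : X => x T : R^o)).
    exact: cvg_snd.
  exact: proj_cont.
have h3 : {for p, continuous (fun q : R * X => aa (1 - q.1) q.2 T : R^o)}.
  exact: aa_cont.
have h4 := continuousB h2 h3.
exact: continuousD h1 h4.
Qed.

Theorem topo_main : homotopy_equivalent R A B.
Proof.
exists Fm, id; split.
- split; first exact: continuous_subspaceT Fm_cont.
  exact: Fm_in.
- split; first exact: continuous_subspaceT (fun x => @cvg_id _ _).
  exact: BA.
- exists (fun p : R * X => Km (1 - p.1) p.2); split.
  + exact: continuous_subspaceT Km_cont.
  + by move=> t x _ Ax; apply: Km_in.
  + by move=> x Ax /=; rewrite subr0 Km1.
  + by move=> x Ax /=; rewrite subrr Km0.
- exists (fun p : R * X => p.2); split.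
  + apply: continuous_subspaceT => p; exact: cvg_snd.
  + by [].
  + by move=> x Bx /=; rewrite Fm_id.
  + by [].
Qed.

End Topo.

Lemma entry_le (R : realType) (d : nat) (u : 'rV[R]_d) k : `|u 0 k| <= `|u|.
Proof.
rewrite [leRHS]/Num.Def.normr /= mx_normrE; apply/bigmax_geP; right => /=.
by exists (0, k).
Qed.

Section Geo.
Variables (R : realType) (d m : nat) (v : 'I_m -> 'rV[R]_d) (r : 'rV[R]_d).
Implicit Types (S T : {set 'I_m}) (lam : 'I_m -> R).

Definition rep S lam : Prop := [/\ forall i, 0 <= lam i,
  forall i, i \notin S -> lam i = 0, \sum_i lam i = 1 & \sum_i lam i *: v i = r].

Definition fS S : {set 'I_m} := [set i | `[< exists lam, rep S lam /\ 0 < lam i >]].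

Lemma in_fS S i : reflect (exists lam, rep S lam /\ 0 < lam i) (i \in fS S).
Proof. rewrite inE; exact: asboolP. Qed.

Lemma fS_sub S : fS S \subset S.
Proof.
apply/fintype.subsetP => i /in_fS [lam [[_ lS _ _] li]]; apply: contraTT li => iS.
by rewrite lS // ltxx.
Qed.

Lemma fS_mono S T : S \subset T -> fS S \subset fS T.
Proof.
move=> ST; apply/fintype.subsetP => i /in_fS [lam [[l0 lS l1 lv] li]]; apply/in_fS.
exists lam; split => //; split => // j jT; apply: lS; apply: contra jT.
exact: (fintype.subsetP ST).
Qed.

Lemma sum_delta1 (i : 'I_m) (c : R) : \sum_j (if j == i then c else 0) = c.
Proof. by rewrite -big_mkcond /= big_pred1_eq. Qed.

Lemma sum_delta (i : 'I_m) (c : R) (w : 'I_m -> 'rV[R]_d) :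
  \sum_j (if j == i then c else 0) *: w j = c *: w i.
Proof.
rewrite (eq_bigr (fun j => if j == i then c *: w j else 0)); last first.
  by move=> j _; case: eqP => // _; rewrite scale0r.
by rewrite -big_mkcond /= big_pred1_eq.
Qed.

Lemma fS_id S : in_relint_conv v S r -> fS S = S.
Proof.
move=> [[lam [l0 lS l1 lv]] [e e0 he]].
apply/eqP; rewrite finset.eqEsubset fS_sub /=; apply/fintype.subsetP => i iS.
set w := r - v i.
have hw := normr_ge0 w.
set t := e / (2 * (`|w| + 1)).
have t0 : 0 < t by rewrite divr_gt0 // mulr_gt0 //; lra.
have tw : t * `|w| < e.
  have q1 : `|w| / (2 * (`|w| + 1)) < 1.
    by rewrite ltr_pdivrMr; [lra | rewrite mulr_gt0 //; lra].
  rewrite /t mulrAC -mulrA; nra.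
have jni : forall j, j \notin S -> (j == i) = false.
  by move=> j jS; apply/eqP => ji; rewrite ji iS in jS.
have yaff : in_aff v S (r + t *: w).
  exists (fun j => (1 + t) * lam j - (if j == i then t else 0)); split.
  - by move=> j jS; rewrite lS // jni // mulr0 subr0.
  - by rewrite sumrB -mulr_sumr l1 mulr1 sum_delta1 addrK.
  rewrite (eq_bigr (fun j => (1 + t) *: (lam j *: v j) - (if j == i then t else 0) *: v j)); last first.
    by move=> j _; rewrite scalerBl scalerA.
  rewrite sumrB sum_delta -scaler_sumr lv /w scalerDl scale1r scalerBr addrA.
  done.
have ynear : `|r + t *: w - r| < e.
  by rewrite addrAC subrr add0r normrZ gtr0_norm.
have [nu [n0 nS n1 nv]] := he _ yaff ynear.
have t1 : 1 + t != 0 by rewrite gt_eqF //; lra.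
apply/in_fS; exists (fun j => (1 + t)^-1 * (nu j + (if j == i then t else 0))).
split; [split|].
- move=> j; rewrite mulr_ge0 //; first by rewrite invr_ge0; lra.
  by rewrite addr_ge0 //; case: ifP => _ //; apply: ltW.
- by move=> j jS; rewrite nS // jni // addr0 mulr0.
- by rewrite -mulr_sumr big_split /= n1 sum_delta1 mulVf.
- rewrite (eq_bigr (fun j => (1 + t)^-1 *: (nu j *: v j + (if j == i then t else 0) *: v j))); last first.
    by move=> j _; rewrite -scalerA scalerDl.
  rewrite -scaler_sumr big_split /= nv sum_delta /w.
  have -> : r + t *: (r - v i) + t *: v i = (1 + t) *: r.
    by rewrite scalerBr addrA subrK scalerDl scale1r.
  by rewrite scalerA mulVf // scale1r.
- rewrite eqxx mulr_gt0 //; first by rewrite invr_gt0; lra.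
  have := n0 i; lra.
Qed.


Lemma fS_bal S : in_conv v S r -> in_relint_conv v (fS S) r.
Proof.
move=> [lam0 rl0].
have hL : forall i, exists lam, rep S lam /\ (i \in fS S -> 0 < lam i).
  move=> i; case: (boolP (i \in fS S)) => [/in_fS [lam [rl li]]|_].
    by exists lam.
  by exists lam0.
have [L HL] := choice hL.
have L0 : forall i j, 0 <= L i j by move=> i j; case: (HL i) => -[h _ _ _] _; exact: h.
have LS : forall i j, j \notin S -> L i j = 0 by move=> i j; case: (HL i) => -[_ h _ _] _; exact: h.
have L1 : forall i, \sum_j L i j = 1 by move=> i; case: (HL i) => -[_ _ h _] _; exact: h.
have Lv : forall i, \sum_j L i j *: v j = r by move=> i; case: (HL i) => -[_ _ _ h] _; exact: h.
have Lp : forall i, i \in fS S -> 0 < L i i by move=> i; case: (HL i) => _ h; exact: h.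
set c := ((m.+1)%:R : R)^-1.
have c0 : 0 < c by rewrite invr_gt0 ltr0n.
have cm : c * (m.+1)%:R = 1 by rewrite mulVf // pnatr_eq0.
set ls := fun j => c * (lam0 j + \sum_i L i j).
case: rl0 => a0 aS a1 av.
have rls : rep S ls.
  split.
  - move=> j; apply: mulr_ge0; first exact: ltW.
    by apply: addr_ge0 => //; apply: sumr_ge0 => i _; apply: L0.
  - by move=> j jS; rewrite /ls aS // big1 ?addr0 ?mulr0 // => i _; apply: LS.
  - rewrite -mulr_sumr big_split /= a1 exchange_big /= (eq_bigr (fun _ => 1)); last first.
      by move=> i _; apply: L1.
    rewrite sumr_const card_ord.
    have -> : (1 + m%:R : R) = (m.+1)%:R by rewrite addrC natr1.
    exact: cm.
  - rewrite (eq_bigr (fun j => c *: (lam0 j *: v j + \sum_i (L i j *: v j)))); last first.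
      by move=> j _; rewrite -scalerA scalerDl scaler_suml.
    rewrite -scaler_sumr big_split /= av exchange_big /= (eq_bigr (fun _ => r)); last first.
      by move=> i _; apply: Lv.
    by rewrite sumr_const card_ord -mulrS -scaler_nat scalerA cm scale1r.
have lpos : forall j, j \in fS S -> 0 < ls j.
  move=> j jf; rewrite /ls mulr_gt0 // (bigD1 j) //=.
  have h1 := a0 j; have h2 := Lp j jf.
  have h3 : 0 <= \sum_(i | i != j) L i j by apply: sumr_ge0 => i _; apply: L0.
  lra.
case: rls => l0 lS l1 lv.
have lsupp : forall j, j \notin fS S -> ls j = 0.
  move=> j jf; apply/eqP; rewrite eq_le l0 ssrbool.andbT leNgt; apply: contra jf => lj.
  by apply/in_fS; exists ls; split.
have ls1 : forall j, ls j <= 1.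
  by move=> j; rewrite -l1 (bigD1 j) //= lerDl sumr_ge0.
split; first by exists ls; split.
set Sf := fS S.
set M : 'M[R]_(m, d) := \matrix_(j, k) (if j \in Sf then (v j - r) 0 k else 0).
have rowM : forall j, row j M = if j \in Sf then v j - r else 0.
  by move=> j; apply/rowP => k; rewrite !mxE; case: ifP => _; rewrite ?mxE.
set P := pinvmx M.
set K := \sum_k \sum_j `|P k j|.
have K0 : 0 <= K by apply: sumr_ge0 => k _; apply: sumr_ge0.
set dl := \big[Num.min/1]_(j | j \in Sf) ls j.
have d0 : 0 < dl.
  rewrite ltNge; apply/negP => /bigmin_leP [h|[j jf h]]; first lra.
  by have := lpos j jf; lra.
have dle : forall j, j \in Sf -> dl <= ls j.
  by move=> j jf; apply: bigmin_le_cond.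
have den : 0 < (m.+1)%:R * (K + 1) by rewrite mulr_gt0 ?ltr0n //; lra.
exists (dl / ((m.+1)%:R * (K + 1))); first by rewrite divr_gt0.
move=> y [mu [muS mu1 muv]] yr.
set u := y - r.
have uM : u = (\row_j mu j) *m M.
  rewrite mulmx_sum_row (eq_bigr (fun j => mu j *: (v j - r))); last first.
    move=> j _; rewrite rowM mxE; case: ifP => // jf.
    by rewrite muS ?jf // !scale0r.
  rewrite (eq_bigr (fun j => mu j *: v j - mu j *: r)); last by move=> j _; rewrite scalerBr.
  by rewrite sumrB -scaler_suml mu1 scale1r muv.
have uin : (u <= M)%MS by rewrite uM submxMl.
set cc := u *m P.
have ccM : cc *m M = u := mulmxKpV uin.
set c' := fun j => if j \in Sf then cc 0 j else 0.
set sg := \sum_j c' j.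
have hc'u : \sum_j c' j *: (v j - r) = u.
  rewrite -ccM mulmx_sum_row; apply: eq_bigr => j _; rewrite rowM /c'.
  by case: ifP => _; rewrite ?scaler0 ?scale0r.
have cb : forall j, `|cc 0 j| <= `|u| * K.
  move=> j; rewrite /cc mxE.
  apply: (le_trans (ler_norm_sum _ _ _)).
  rewrite /K mulr_sumr; apply: ler_sum => k _; rewrite normrM.
  apply: ler_pM => //; first exact: entry_le.
  by rewrite (bigD1 j) //= lerDl sumr_ge0.
have c'b : forall j, `|c' j| <= `|u| * K.
  by move=> j; rewrite /c'; case: ifP => _; rewrite ?normr0 ?mulr_ge0.
have sgb : `|sg| <= m%:R * (`|u| * K).
  apply: (le_trans (ler_norm_sum _ _ _)).
  apply: le_trans (ler_sum _ (fun j _ => c'b j)) _.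
  by rewrite sumr_const card_ord mulr_natl.
have hu := normr_ge0 u.
have etab : (m.+1)%:R * (`|u| * K) < dl.
  move: yr; rewrite -/u ltr_pdivlMr // => yr.
  have p := mulr_ge0 (ler0n _ m.+1) hu.
  nra.
exists (fun j => c' j + (1 - sg) * ls j); split.
- move=> j; case: (boolP (j \in Sf)) => jf; last first.
    by rewrite /c' (negbTE jf) lsupp // mulr0 addr0.
  have h1 := c'b j; have h2 := dle j jf; have h3 := ls1 j; have h4 := l0 j.
  move: h1 sgb etab; set eta := `|u| * K; rewrite -natr1 mulrDl mul1r.
  set a := m%:R * eta => h1 h5 h6.
  move: h1 h5; rewrite !ler_norml => /andP [h1 _] /andP [h5 h5'].
  have p1 : 0 <= (a - sg) * ls j by rewrite mulr_ge0 //; lra.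
  have ha : 0 <= a by rewrite /a mulr_ge0 // /eta mulr_ge0.
  have p2 : 0 <= a * (1 - ls j) by rewrite mulr_ge0 //; lra.
  nra.
- by move=> j jf; rewrite /c' (negbTE jf) lsupp // mulr0 addr0.
- by rewrite big_split /= -mulr_sumr l1 mulr1 -/sg addrC subrK.
- rewrite (eq_bigr (fun j => c' j *: v j + (1 - sg) *: (ls j *: v j))); last first.
    by move=> j _; rewrite scalerDl scalerA.
  rewrite big_split /= -scaler_sumr lv.
  have -> : \sum_j c' j *: v j = u + sg *: r.
    have e1 : \sum_j c' j *: (v j - r) = \sum_j c' j *: v j - sg *: r.
      rewrite (eq_bigr (fun j => c' j *: v j - c' j *: r)); last first.
        by move=> j _; rewrite scalerBr.
      by rewrite sumrB -scaler_suml.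
    by rewrite -hc'u e1 subrK.
  by rewrite -addrA -scalerDl (addrC sg) subrK scale1r subrK.
Qed.

End Geo.

Theorem lemma1 (R : realType) (d m : nat) (v : 'I_m -> 'rV[R]_d)
    (r : 'rV[R]_d) (v_inj : injective v) :
  homotopy_equivalent R
    (@order_complex_realization R _ (fun S T : {set 'I_m} => S \subset T)
       (fun S => weakly_balanced v r S /\ S != [set: 'I_m]%SET))
    (@order_complex_realization R _ (fun S T : {set 'I_m} => S \subset T)
       (fun S => balanced v r S /\ S != [set: 'I_m]%SET)).
Proof.
apply: (@topo_main R _ _ _ (@fS R d m v r)).
- exact: fS_sub.
- exact: fS_mono.
- move=> S [hw hS]; split; first exact: fS_bal.
  apply: contra hS => /eqP e.
  by rewrite finset.eqEsubset finset.subsetT /= -e fS_sub.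
- by move=> S [[h _] hS].
- by move=> S [h _]; apply: fS_id.
Qed.
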